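(* There exists a $\sigma$-chasable Dd-MDP instance (a fixed finite state/action structure with $\sigma$ a constant independent of $T$, played for any horizon $T$, with $\Gamma$ the set of all policies) such that every online learning algorithm whose policy regret on this instance is sublinear in $T$ has external regret linear in $T$ on the same instance, and every online learning algorithm whose external regret on this instance is sublinear in $T$ has policy regret linear in $T$.
   Context: Dd-MDP: finite state set $\mathcal S$, finite action set $\mathcal X$, feasible sets $X_s\subseteq\mathcal X$; $T$ rounds from initial state $s_1$. In round $t$ the decision maker plays a (possibly randomized) $x_t\in X_{s_t}$, the adversary chooses a transition function $g_t$ and reward function $f_t$ (values in $[0,1]$), $s_{t+1}=g_t(s_t,x_t)$, reward $f_t(s_t,x_t)$, and $g_t,f_t$ are revealed. A policy is $\gamma:\mathcal S\to\mathcal X$ with $\gamma(s)\in X_s$; its simulation is $s^\gamma_1=s_1$, $x^\gamma_t=\gamma(s^\gamma_t)$, $s^\gamma_{t+1}=g_t(s^\gamma_t,x^\gamma_t)$. Policy regret w.r.t. a finite policy set $\Gamma$: $\max_{\gamma\in\Gamma}\sum_tf_t(s^\gamma_t,x^\gamma_t)-\sum_t\mathbb{E}[f_t(s_t,x_t)]$. External regret: $\max_{\gamma\in\Gamma}\sum_tf_t(s_t,\gamma(s_t))-\sum_t\mathbb{E}[f_t(s_t,x_t)]$, where $s_t$ are the algorithm's actual states. $\sigma$-chasability: there is a (possibly randomized) chasing oracle such that for any target policy $\gamma\in\Gamma$, any round $t_{\mathrm{init}}$ and any initial state $s_{\mathrm{init}}$, it outputs in each round $t\ge t_{\mathrm{init}}$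 an action $\hat x(t)$ feasible for $\hat s(t)$ (with $\hat s(t_{\mathrm{init}})=s_{\mathrm{init}}$, $\hat s(t)=g_{t-1}(\hat s(t-1),\hat x(t-1))$), observes $g_t,f_t$ afterwards, and for every $t_{\mathrm{final}}\ge t_{\mathrm{init}}$ satisfies $\sum_{t=t_{\mathrm{init}}}^{t_{\mathrm{final}}}f_t(s^\gamma_t,x^\gamma_t)-\sum_{t=t_{\mathrm{init}}}^{t_{\mathrm{final}}}\mathbb{E}[f_t(\hat s(t),\hat x(t))]\le\sigma$. *)

(* Defs.v *)
From HB Require Import structures.
From mathcomp Require Import all_boot all_order all_algebra.
From mathcomp Require Import reals.
Set Implicit Arguments. Unset Strict Implicit. Unset Printing Implicit Defensive.
Import Order.TTheory GRing.Theory Num.Theory.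
Local Open Scope ring_scope.

(* Rounds are indexed from 0: internal round t is round t+1 of the paper.
   An adversary is a pair of infinite sequences
     gs : nat -> S -> X -> S   (transition functions g_t)
     fs : nat -> S -> X -> R   (reward functions f_t)
   fixed in advance (oblivious); a horizon-T game uses the first T of them. *)

Section DdMDP.
Variables (R : realType) (S X : finType).

Record hist_item := HistItem {
  h_state : S; h_act : X; h_trans : S -> X -> S; h_rew : S -> X -> R }.

(* A (behavioural) randomized online strategy: given the absolute round t,
   the history observed so far and the current state, a distribution on X. *)
Definition strategy := nat -> seq hist_item -> S -> X -> R.

Definition valid_strategy (Xs : S -> {set X}) (p : strategy) : Prop :=
  forall t h s,
    (forall x, 0 <= p t h s x) /\
    (forall x, x \notin Xs s -> p t h s x = 0) /\
    \sum_x p t h s x = 1.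

(* Expected value of  sum_{k < n} score (t+k) s_{t+k} x_{t+k}  when the strategy
   p is run from round t, with history h and current state s, against gs, fs. *)
Fixpoint exp_sum (p : strategy) (gs : nat -> S -> X -> S)
    (fs : nat -> S -> X -> R) (score : nat -> S -> X -> R)
    (n t : nat) (h : seq hist_item) (s : S) : R :=
  match n with
  | 0 => 0
  | n'.+1 => \sum_x p t h s x *
        (score t s x +
         exp_sum p gs fs score n' t.+1
           (rcons h (HistItem s x (gs t) (fs t))) (gs t s x))
  end.

Definition is_policy (Xs : S -> {set X}) (gam : S -> X) : Prop :=
  forall s, gam s \in Xs s.

Fixpoint sim (s1 : S) (gs : nat -> S -> X -> S) (gam : S -> X) (t : nat) : S :=
  match t with
  | 0 => s1
  | t'.+1 => gs t' (sim s1 gs gam t') (gam (sim s1 gs gam t'))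
  end.

Definition admissible_adv (adm : (S -> X -> S) -> Prop)
    (gs : nat -> S -> X -> S) (fs : nat -> S -> X -> R) : Prop :=
  forall t, adm (gs t) /\ (forall s x, 0 <= fs t s x <= 1).

Definition policy_reward (s1 : S) gs (fs : nat -> S -> X -> R) gam (a b : nat) : R :=
  \sum_(a <= t < b) fs t (sim s1 gs gam t) (gam (sim s1 gs gam t)).

Definition chasable (Xs : S -> {set X}) (s1 : S)
    (adm : (S -> X -> S) -> Prop) (sigma : R) : Prop :=
  exists oracle : (S -> X) -> nat -> S -> strategy,
    (forall gam ti si, valid_strategy Xs (oracle gam ti si)) /\
    forall gam, is_policy Xs gam ->
    forall (ti : nat) (si : S) gs fs, admissible_adv adm gs fs ->
    forall tf : nat, (ti <= tf)%N ->
      policy_reward s1 gs fs gam ti tf.+1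
      - exp_sum (oracle gam ti si) gs fs fs (tf.+1 - ti) ti [::] si <= sigma.

Definition algorithm := nat -> strategy.

Definition valid_alg (Xs : S -> {set X}) (alg : algorithm) : Prop :=
  forall T, valid_strategy Xs (alg T).

Definition alg_reward (alg : algorithm) (s1 : S) gs fs (T : nat) : R :=
  exp_sum (alg T) gs fs fs T 0 [::] s1.

(* Policy regret against the comparator gam (the regret is the max over gam
   in Gamma of this quantity). *)
Definition policy_regret_vs (alg : algorithm) (s1 : S) gs fs gam (T : nat) : R :=
  policy_reward s1 gs fs gam 0 T - alg_reward alg s1 gs fs T.

Definition external_regret_vs (alg : algorithm) (s1 : S) gs fs gam (T : nat) : R :=
  exp_sum (alg T) gs fs (fun t s _ => fs t s (gam s)) T 0 [::] s1
  - alg_reward alg s1 gs fs T.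

Definition reg_sublinear
    (reg : algorithm -> S -> (nat -> S -> X -> S) -> (nat -> S -> X -> R) ->
           (S -> X) -> nat -> R)
    (Xs : S -> {set X}) (s1 : S) (adm : (S -> X -> S) -> Prop)
    (alg : algorithm) : Prop :=
  forall eps : R, 0 < eps -> exists T0 : nat, forall T : nat, (T0 <= T)%N ->
    forall gs fs, admissible_adv adm gs fs ->
    forall gam, is_policy Xs gam -> reg alg s1 gs fs gam T <= eps * T%:R.

Definition reg_linear
    (reg : algorithm -> S -> (nat -> S -> X -> S) -> (nat -> S -> X -> R) ->
           (S -> X) -> nat -> R)
    (Xs : S -> {set X}) (s1 : S) (adm : (S -> X -> S) -> Prop)
    (alg : algorithm) : Prop :=
  exists c : R, 0 < c /\ exists T0 : nat, forall T : nat, (T0 <= T)%N ->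
    exists gs fs, admissible_adv adm gs fs /\
    exists gam, is_policy Xs gam /\ c * T%:R <= reg alg s1 gs fs gam T.

End DdMDP.

(* Main.v *)
Require Import Defs.
From HB Require Import structures.
From mathcomp Require Import all_boot all_order all_algebra.
From mathcomp Require Import reals.
From mathcomp Require Import ring lra.
Import Order.TTheory GRing.Theory Num.Theory.
Local Open Scope ring_scope.

Section Gen.
Variables (R : realType) (S X : finType).

Lemma exp_sum_lin (p : strategy R S X) gs fs sc1 sc2 (c : R) n :
  forall t h s,
  exp_sum p gs fs sc1 n t h s - c * exp_sum p gs fs sc2 n t h s =
  exp_sum p gs fs (fun t s x => sc1 t s x - c * sc2 t s x) n t h s.
Proof.
elim: n => [|n IH] t h s /=; first by rewrite mulr0 subr0.
rewrite mulr_sumr -sumrB; apply: eq_bigr => x _.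
rewrite -IH; ring.
Qed.

Lemma exp_sum_pot (p : strategy R S X) gs fs sc (phi : S -> R) (c M : R) n :
  (forall t h s, (forall x, 0 <= p t h s x) /\ \sum_x p t h s x = 1) ->
  (forall y, phi y <= M) ->
  (forall t s x, c + phi s <= sc t s x + phi (gs t s x)) ->
  forall t h s, n%:R * c + phi s - M <= exp_sum p gs fs sc n t h s.
Proof.
move=> Hp HM Hsc; elim: n => [|n IH] t h s /=.
  by have := HM s; lra.
have [Hp0 Hp1] := Hp t h s.
apply: (@le_trans _ _ (\sum_x p t h s x * (n.+1%:R * c + phi s - M))).
  by rewrite -mulr_suml Hp1 mul1r.
apply: ler_sum => x _; apply: ler_wpM2l => //.
have := IH t.+1 (rcons h (HistItem s x (gs t) (fs t))) (gs t s x).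
have := Hsc t s x; rewrite -natr1; lra.
Qed.

End Gen.

Section Inst.
Variable R : realType.

Definition Xs0 : bool -> {set bool} := fun _ => setT.
Definition adm0 : (bool -> bool -> bool) -> Prop := fun g => g = (fun s x => x).
Definition gs0 : nat -> bool -> bool -> bool := fun _ s x => x.
Definition fs0 : nat -> bool -> bool -> R :=
  fun _ s x => (if s then 1/2 else 0) + (if x then 0 else 1/4).

Lemma adm_gs0 : admissible_adv adm0 gs0 fs0.
Proof. by move=> t; split => // s x; rewrite /fs0; case: s; case: x; lra. Qed.

Lemma sim_iter gs gam : (forall t, adm0 (gs t)) ->
  forall t, sim true gs gam t = iter t gam true.
Proof. by move=> Hg; elim=> [|t IH] //=; rewrite Hg IH. Qed.

Lemma key (alg : algorithm R bool bool) : valid_alg Xs0 alg -> forall T,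
  (T%:R / 4 - 1/2 <=
   policy_regret_vs alg true gs0 fs0 (fun _ => true) T +
   external_regret_vs alg true gs0 fs0 (fun _ => false) T).
Proof.
move=> Hv T.
have PR : policy_reward true gs0 fs0 (fun _ => true) 0 T = T%:R / 2.
  rewrite /policy_reward (@eq_bigr _ _ _ _ _ _ _ (fun _ => 1/2)).
    by rewrite sumr_const_nat subn0 -mulr_natl; lra.
  move=> i _; rewrite sim_iter //.
  have -> : iter i (fun=> true) true = true by case: i.
  rewrite /fs0 /=; lra.
rewrite /policy_regret_vs /external_regret_vs PR /alg_reward.
set Ef := exp_sum _ _ _ fs0 _ _ _ _.
set Ee := exp_sum _ _ _ _ _ _ _ _.
have -> : T%:R / 2 - Ef + (Ee - Ef) = T%:R / 2 + (Ee - 2 * Ef) by ring.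
rewrite /Ee /Ef exp_sum_lin.
have := @exp_sum_pot R bool bool (alg T) gs0 fs0
  (fun t s x => fs0 t s false - 2 * fs0 t s x)
  (fun y => if y then 0 else 1/2) (-1/4) (1/2) T.
move=> /(_ _ _ _ 0%N [::] true) /=.
have Hp : forall t h s, (forall x, 0 <= alg T t h s x) /\ \sum_x alg T t h s x = 1.
  by move=> t h s; have [? [? ?]] := Hv T t h s.
have HM : forall y : bool, (if y then 0 else 1/2) <= 1/2 :> R.
  by case; lra.
have Hsc : forall t s x, -1/4 + (if s then 0 else 1/2) <=
   fs0 t s false - 2 * fs0 t s x + (if gs0 t s x then 0 else 1/2) :> R.
  by move=> t s x; rewrite /fs0 /gs0; case: s; case: x; lra.
move=> /(_ Hp HM Hsc); lra.
Qed.


Definition orc (gam : bool -> bool) (ti : nat) (si : bool) : strategy R bool bool :=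
  fun t h s x => if x == gam (iter t gam true) then 1 else 0.

Lemma sum_det (a : bool) (F : bool -> R) :
  \sum_x (if x == a then 1 else 0) * F x = F a.
Proof. by rewrite big_bool; case: a => /=; ring. Qed.

Lemma orc_follow gam ti si gs fs : (forall t, adm0 (gs t)) ->
  forall n t h, exp_sum (orc gam ti si) gs fs fs n t h (iter t gam true) =
  \sum_(t <= k < t + n) fs k (iter k gam true) (gam (iter k gam true)).
Proof.
move=> Hg; elim=> [|n IH] t h /=; first by rewrite addn0 big_geq.
rewrite /orc sum_det Hg.
rewrite big_ltn ?addnS ?ltnS ?leq_addr //.
by rewrite -addSn (IH t.+1).
Qed.

Lemma chas : chasable Xs0 true adm0 (1 : R).
Proof.
exists orc; split.
  move=> gam ti si t h s; split; first by move=> x; rewrite /orc; case: ifP.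
  split; first by move=> x; rewrite inE.
  by rewrite big_bool /orc; case: (gam (iter t gam true)) => /=; rewrite ?addr0 ?add0r.
move=> gam _ ti si gs fs Hadm tf Htf.
have Hg : forall t, adm0 (gs t) by move=> t; case: (Hadm t).
have Hf := fun t => (Hadm t).2.
rewrite subSn // /=.
rewrite {1}/orc sum_det Hg.
rewrite (orc_follow gam ti si gs fs Hg) /policy_reward.
rewrite (eq_bigr (fun k => fs k (iter k gam true) (gam (iter k gam true)))); last first.
  by move=> k _; rewrite sim_iter.
rewrite big_ltn ?ltnS // addSn subnKC //.
set Y := \sum_(_ <= _ < _) _.
have := Hf ti (iter ti gam true) (gam (iter ti gam true)).
have := Hf ti si (gam (iter ti gam true)).
lra.
Qed.

End Inst.

Theorem theorem8 (R : realType) :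
  exists (S X : finType) (Xs : S -> {set X}) (s1 : S)
         (adm : (S -> X -> S) -> Prop) (sigma : R),
    (forall s, Xs s != set0) /\ (exists g, adm g) /\
    chasable Xs s1 adm sigma /\
    (forall alg : algorithm R S X, valid_alg Xs alg ->
       reg_sublinear (@policy_regret_vs R S X) Xs s1 adm alg ->
       reg_linear (@external_regret_vs R S X) Xs s1 adm alg) /\
    (forall alg : algorithm R S X, valid_alg Xs alg ->
       reg_sublinear (@external_regret_vs R S X) Xs s1 adm alg ->
       reg_linear (@policy_regret_vs R S X) Xs s1 adm alg).
Proof.
exists bool, bool, Xs0, true, adm0, 1.
split.
  by move=> s; apply/set0Pn; exists true; rewrite inE.
split; first by exists (fun s x => x).
split; first exact: chas.
split.
- move=> alg Hv Hs; have [T0 HT0] := Hs (1/16) ltac:(lra).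
  exists (1/8); split; first lra.
  exists (maxn T0 8) => T HT; exists gs0, (@fs0 R); split; first exact: adm_gs0.
  exists (fun _ => false); split; first by move=> ?; rewrite inE.
  have := HT0 T (leq_trans (leq_maxl _ _) HT) gs0 (@fs0 R) (@adm_gs0 R) (fun _ => true) ltac:(by move=> ?; rewrite inE).
  have := @key R alg Hv T.
  have : 8%:R <= T%:R :> R by rewrite ler_nat (leq_trans (leq_maxr _ _) HT).
  lra.
- move=> alg Hv Hs; have [T0 HT0] := Hs (1/16) ltac:(lra).
  exists (1/8); split; first lra.
  exists (maxn T0 8) => T HT; exists gs0, (@fs0 R); split; first exact: adm_gs0.
  exists (fun _ => true); split; first by move=> ?; rewrite inE.
  have := HT0 T (leq_trans (leq_maxl _ _) HT) gs0 (@fs0 R) (@adm_gs0 R) (fun _ => false) ltac:(by move=> ?; rewrite inE).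
  have := @key R alg Hv T.
  have : 8%:R <= T%:R :> R by rewrite ler_nat (leq_trans (leq_maxr _ _) HT).
  lra.
Qed.
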